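(* Let $X$ be a normal Hausdorff topological space, $\Phi$ a local semiflow on $X$, $\mathscr A$ an attractor of $\Phi$, and $A$ an attractor of $\Phi$ in $\mathscr A$, with dual repeller $A^*=\mathscr A\setminus\Omega_{\mathscr A}(A)$. Let $\gamma:\mathbb R\to\mathscr A$ be a full solution with $\gamma(0)=x\in\mathscr A$. Then: (1) if $\omega(\gamma)\cap A^*\ne\emptyset$, then $\gamma(\mathbb R)\subset A^*$; (2) if $\alpha(\gamma)\cap\overline A^{\mathscr A}\ne\emptyset$, then $\gamma(\mathbb R)\subset A$, where $\overline A^{\mathscr A}$ is the closure of $A$ in $\mathscr A$; (3) if $x\in\mathscr A\setminus(A\cup A^* )$, then $\alpha(\gamma)\subset A^*$ and $\omega(\gamma)\subset A$.
   Context: A local semiflow $\Phi$ on $X$ is a continuous map from an open subset $\mathcal D_\Phi\subset\mathbb R^+\times X$ to $X$ such that: (i) for each $x$ there is $T_x\in(0,\infty]$ with $(t,x)\in\mathcal D_\Phi$ iff $t\in[0,T_x)$; (ii) $\Phi(0,x)=x$; (iii) if $(t+s,x)\in\mathcal D_\Phi$ with $t,s\ge0$ then $\Phi(t+s,x)=\Phi(t,\Phi(s,x))$. Write $\Phi(t)x=\Phi(t,x)$, $\Phi(J)M=\{\Phi(t)x:x\in M,\ t\in J\cap[0,T_x)\}$, $\Phi(t)M=\Phi(\{t\})M$. A full solution is $\gamma:\mathbb R\to X$ with $\gamma(t)=\Phi(t-s)\gamma(s)$ for all $s\le t$. $\omega(\gamma)=\{y:\exists t_n\to\infty,\ \gamma(t_n)\to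 y\}$, $\alpha(\gamma)=\{y:\exists t_n\to-\infty,\ \gamma(t_n)\to y\}$. Convention: $U$ is a neighborhood of $A$ (in a given space) if the closure of $A$ is contained in the interior of $U$. A set $K$ is invariant if $\Phi(t)K\subset K$ and $K\subset\Phi(t)K$ for all $t\ge0$. $K$ attracts $B$ if $T_x=\infty$ for all $x\in B$ and for every neighborhood $V$ of $K$ there is $t_0>0$ with $\Phi(t)B\subset V$ for all $t>t_0$. A set is s-compact if every sequence in it has a subsequence converging to a point of the set. An attractor is a nonempty s-compact invariant set $\mathscr A$ for which there is a neighborhood $N$ of $\mathscr A$ such that $\mathscr A$ attracts $N$ and every s-compact invariant subset of $N$ is contained in $\mathscr A$. The restriction $\Phi|_{\mathscr A}$ is a global semiflow on $\mathscr A$ (subspace topology); an attractor of $\Phi$ in $\mathscr A$ is an attractor of $\Phi|_{\mathscr A}$ with all topological notions taken in $\mathscr A$, and $\Omega_{\mathscr A}(A)=\{x\in\mathscr A: A \text{ attracts } \{x\} \text{ under } \Phi|_{\mathscr A}\}$ is its region of attraction in $\mathscr A$. *)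

(* Defs.v *)
From HB Require Import structures.
From mathcomp Require Import all_boot all_order all_algebra.
From mathcomp Require Import all_classical all_reals all_analysis.
From mathcomp Require Import Rstruct Rstruct_topology.
From Stdlib Require Import Rdefinitions.
Set Implicit Arguments. Unset Strict Implicit. Unset Printing Implicit Defensive.
Import Order.TTheory GRing.Theory Num.Theory.
Local Open Scope classical_set_scope.
Local Open Scope ring_scope.

Section Semiflows.
Variable X : topologicalType.

Definition local_semiflow (D : set (R * X)) (Phi : R -> X -> X) : Prop :=
  (exists U : set (R * X), open U /\ D = U `&` [set p | 0 <= p.1]) /\
  {within D, continuous (fun p : R * X => Phi p.1 p.2)} /\
  (forall x : X, exists Tx : \bar R, (0 < Tx)%E /\
     forall t : R, D (t, x) <-> (0 <= t /\ (t%:E < Tx)%E)) /\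
  (forall x : X, Phi 0 x = x) /\
  (forall (t s : R) (x : X), 0 <= t -> 0 <= s -> D (t + s, x) ->
     Phi (t + s) x = Phi t (Phi s x)).

Definition sf_image (D : set (R * X)) (Phi : R -> X -> X) (J : set R) (M : set X) : set X :=
  [set y | exists t x, J t /\ M x /\ D (t, x) /\ y = Phi t x].
Definition sf_at D Phi (t : R) (M : set X) := sf_image D Phi [set t] M.

Definition full_solution D Phi (g : R -> X) : Prop :=
  forall s t : R, s <= t -> D (t - s, g s) /\ g t = Phi (t - s) (g s).

Definition omega_limit (g : R -> X) : set X :=
  [set y | exists tn : nat -> R, tn @ \oo --> +oo /\ (g \o tn) @ \oo --> y].
Definition alpha_limit (g : R -> X) : set X :=
  [set y | exists tn : nat -> R, tn @ \oo --> -oo /\ (g \o tn) @ \oo --> y].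

(** Topological notions relative to an ambient subspace S of X
    (S = setT gives the notions in X itself). *)
Definition rel_open (S U : set X) : Prop := exists V, open V /\ U = V `&` S.
Definition rel_closure (S A : set X) : set X :=
  [set y | S y /\ forall U, rel_open S U -> U y -> U `&` A !=set0].
Definition rel_interior (S U : set X) : set X :=
  [set y | exists W, rel_open S W /\ W y /\ W `<=` U].
Definition nbhd_in (S A U : set X) : Prop :=
  U `<=` S /\ rel_closure S A `<=` rel_interior S U.
Definition rel_cvg (S : set X) (u : nat -> X) (y : X) : Prop :=
  forall U, rel_open S U -> U y -> \forall n \near \oo, U (u n).

Definition s_compact_in (S K : set X) : Prop :=
  K `<=` S /\
  forall u : nat -> X, (forall n, K (u n)) ->
    exists (phi : nat -> nat) (y : X),
      (forall m n : nat, ltn m n -> ltn (phi m) (phi n)) /\ K y /\ rel_cvg S (u \o phi) y.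

Definition invariant_in D Phi (S K : set X) : Prop :=
  K `<=` S /\ forall t : R, 0 <= t -> sf_at D Phi t K `<=` K /\ K `<=` sf_at D Phi t K.

Definition attracts_in D Phi (S K B : set X) : Prop :=
  (forall x, B x -> forall t : R, 0 <= t -> D (t, x)) /\
  forall V, nbhd_in S K V ->
    exists t0 : R, 0 < t0 /\ forall t : R, t0 < t -> sf_at D Phi t B `<=` V.

Definition attractor_in D Phi (S A : set X) : Prop :=
  A !=set0 /\ s_compact_in S A /\ invariant_in D Phi S A /\
  exists N, nbhd_in S A N /\ attracts_in D Phi S A N /\
    forall K, K `<=` N -> s_compact_in S K -> invariant_in D Phi S K -> K `<=` A.

Definition attractor D Phi (A : set X) := attractor_in D Phi setT A.

Definition region_of_attraction_in D Phi (SA A : set X) : set X :=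
  [set x | SA x /\ attracts_in D Phi SA A [set x]].

Definition dual_repeller_in D Phi (SA A : set X) : set X :=
  SA `\` region_of_attraction_in D Phi SA A.

End Semiflows.

(* Main.v *)
Require Import Defs.
From HB Require Import structures.
From mathcomp Require Import all_boot all_order all_algebra.
From mathcomp Require Import all_classical all_reals all_analysis.
From mathcomp Require Import Rstruct Rstruct_topology.
From mathcomp Require Import ring lra.
From Stdlib Require Import Rdefinitions.
Set Implicit Arguments. Unset Strict Implicit. Unset Printing Implicit Defensive.
Import Order.TTheory GRing.Theory Num.Theory.
Local Open Scope classical_set_scope.
Local Open Scope ring_scope.

Definition incr (f : nat -> nat) := forall m n : nat, ltn m n -> ltn (f m) (f n).

Lemma incr_ge f : incr f -> forall n, leq n (f n).
Proof.
move=> hf n; elim: n => [|n IH] //.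
apply: (leq_ltn_trans IH); apply: hf; exact: ltnSn.
Qed.

Lemma incr_comp f g : incr f -> incr g -> incr (f \o g).
Proof. by move=> hf hg m n mn; apply: hf; apply: hg. Qed.

Section Topo.
Variable X : topologicalType.
Definition scvg (u : nat -> X) (y : X) :=
  forall V, open V -> V y -> exists N : nat, forall n : nat, leq N n -> V (u n).

Lemma scvgP (u : nat -> X) y : u @ \oo --> y <-> scvg u y.
Proof.
split.
- move=> h V oV Vy.
  have : (u @ \oo) V by apply: h; apply: open_nbhs_nbhs.
  move=> [N _ HN]. exists N => n Hn. exact: HN.
- move=> h V; rewrite nbhsE => -[B [oB By] BV].
  have [N HN] := h B oB By.
  exists N => // n /= Hn. exact/BV/HN.
Qed.

Lemma scvg_sub u y phi : incr phi -> scvg u y -> scvg (u \o phi) y.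
Proof.
move=> hp h V oV Vy; have [N HN] := h V oV Vy.
exists N => n Nn /=; apply: HN; exact: leq_trans Nn (incr_ge hp n).
Qed.

Lemma scvg_ext u v y : (forall n, u n = v n) -> scvg u y -> scvg v y.
Proof.
move=> e h V oV Vy; have [N HN] := h V oV Vy; exists N => n Nn.
by rewrite -e; apply: HN.
Qed.

Lemma scvg_unique (hH : hausdorff_space X) u y z : scvg u y -> scvg u z -> y = z.
Proof.
move=> hy hz; apply: contrapT => ne.
move: hH; rewrite open_hausdorff => /(_ y z).
have /[swap]/[apply] : y != z by apply/eqP.
move=> [[U V] /= [yU zV] [oU oV /eqP UV0]].
rewrite inE in yU; rewrite inE in zV.
have [N1 H1] := hy U oU yU; have [N2 H2] := hz V oV zV.
have : (U `&` V) (u (maxn N1 N2)).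
  split; [apply: H1 | apply: H2]; by rewrite ?leq_maxl ?leq_maxr.
by rewrite UV0.
Qed.

Lemma rel_cvg_scvg S u y : S y -> rel_cvg S u y -> scvg u y.
Proof.
move=> Sy h V oV Vy.
have : \forall n \near \oo, (V `&` S) (u n).
  apply: h; first by exists V.
  by split.
move=> [N _ HN]; exists N => n Nn; by case: (HN n Nn).
Qed.

Lemma scvg_rel_cvg (S : set X) u y : (forall n, S (u n)) -> scvg u y -> rel_cvg S u y.
Proof.
move=> hS h U [V [oV ->]] [Vy _].
have [N HN] := h V oV Vy.
exists N => // n /= Nn; split; [exact: HN | exact: hS].
Qed.
End Topo.

Lemma realinf (t : nat -> R) : t @ \oo --> +oo -> forall M, exists N : nat, forall n : nat, leq N n -> M < t n.
Proof.
rewrite cvgryPgt => h M; have [N _ HN] := h M. by exists N.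
Qed.
Lemma realminf (t : nat -> R) : t @ \oo --> -oo -> forall M, exists N : nat, forall n : nat, leq N n -> t n < M.
Proof.
rewrite cvgrNyPlt => h M; have [N _ HN] := h M. by exists N.
Qed.

Lemma natbound (x : R) : exists n : nat, x <= n%:R.
Proof.
exists (Num.bound `|x|); apply: le_trans (ler_norm x) _.
apply/ltW/archi_boundP; exact: normr_ge0.
Qed.
Ltac nlra := rewrite ?RplusE ?RminusE ?RoppE ?RmultE ?R0E ?R1E; lra.
Fixpoint Fdiag (pe : (nat -> nat) -> nat -> nat -> nat) (k : nat) : nat -> nat :=
  match k with 0%N => pe id 0%N | k'.+1 => Fdiag pe k' \o pe (Fdiag pe k') k'.+1 end.

Lemma Fdiag_incr pe : (forall f k, incr (pe f k)) -> forall k, incr (Fdiag pe k).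
Proof. move=> hp k; elim: k => [|k IH] /=; [exact: hp | exact: incr_comp]. Qed.

Lemma Fdiag_tail pe : (forall f k, incr (pe f k)) ->
  forall k j m, exists m', leq m m' /\ Fdiag pe (k + j) m = Fdiag pe k m'.
Proof.
move=> hp k j; elim: j => [|j IH] m.
  by exists m; rewrite addn0.
rewrite addnS /=.
have [m' [h1 h2]] := IH (pe (Fdiag pe (k + j)) (k + j).+1 m).
exists m'; split => //; apply: leq_trans h1; exact: incr_ge.
Qed.

Lemma diag_incr pe : (forall f k, incr (pe f k)) -> incr (fun n => Fdiag pe n n).
Proof.
move=> hp.
have step i : ltn (Fdiag pe i i) (Fdiag pe i.+1 i.+1).
  rewrite /=; apply: (Fdiag_incr hp i); exact: incr_ge.
move=> m n; elim: n => [//|n IH]; rewrite /ltn /=.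
rewrite ltnS leq_eqVlt => /orP [/eqP -> | /IH h]; first exact: step.
exact: ltn_trans h (step n).
Qed.
Section Main.
Variable X : topologicalType.
Variables (D : set (R * X)) (Phi : R -> X -> X) (SA A : set X).
Hypothesis hN : normal_space X.
Hypothesis hH : hausdorff_space X.
Hypothesis hLS : local_semiflow D Phi.
Hypothesis hSA : attractor D Phi SA.
Hypothesis hA : attractor_in D Phi SA A.

Lemma SAD z t : SA z -> 0 <= t -> D (t, z).
Proof.
case: hSA => _ [_ [_ [N0 [[_ hN0] [[hD _] _]]]]] Sz t0.
apply: hD => //.
have [W [_ [Wz WN]]] : rel_interior setT N0 z.
  apply: hN0; split => // U _ Uz; by exists z.
exact: WN.
Qed.

Lemma SAfwd z t : SA z -> 0 <= t -> SA (Phi t z).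
Proof.
case: hSA => _ [_ [[_ hinv] _]] Sz t0.
have [h1 _] := hinv t t0; apply: h1.
exists t, z; split => //; split => //; split => //; exact: SAD.
Qed.

Lemma Phi_cont t z : SA z -> 0 <= t -> forall V, open V -> V (Phi t z) ->
  exists B, open B /\ B z /\ forall x, B x -> D (t, x) -> V (Phi t x).
Proof.
move=> Sz t0 V oV Vz.
case: hLS => _ [hc _].
have := (subspace_continuousP _ _).1 hc (t, z) (SAD Sz t0).
move=> /(_ V) /=.
have : nbhs (Phi t z) V by apply: open_nbhs_nbhs.
move=> /[swap]/[apply].
move=> [[P Q] /= [Pt Qz] PQ].
move: Qz; rewrite nbhsE => -[B [oB Bz] BQ].
exists B; split => //; split => // x Bx Dx.
have : (P `*` Q) (t, x) by split => //=; [exact: nbhs_singleton | exact: BQ].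
by move/PQ => /(_ Dx).
Qed.

Lemma scvg_Phi t z u : SA z -> 0 <= t -> (forall n, SA (u n)) -> scvg u z ->
  scvg (fun n => Phi t (u n)) (Phi t z).
Proof.
move=> Sz t0 hu hc V oV Vz.
have [B [oB [Bz HB]]] := Phi_cont Sz t0 oV Vz.
have [N HN] := hc B oB Bz.
exists N => n Nn; apply: HB; [exact: HN | exact: SAD].
Qed.

Lemma SAseq u y : (forall n, SA (u n)) -> scvg u y -> SA y.
Proof.
case: hSA => _ [[_ hcomp] _] hu hc.
have [phi [y' [hphi [Sy' hc']]]] := hcomp u hu.
have h1 : scvg (u \o phi) y' by apply: (@rel_cvg_scvg _ setT).
have h2 : scvg (u \o phi) y by apply: scvg_sub.
by rewrite (scvg_unique hH h2 h1).
Qed.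

Local Notation T := (rel_closure SA A).

Lemma AS : A `<=` SA.
Proof. by case: hA => _ [[hs _] _]. Qed.

Lemma Tsub z : T z -> SA z.
Proof. by case. Qed.

Lemma Tseq u y : (forall n, T (u n)) -> scvg u y -> T y.
Proof.
move=> hu hc.
have Sy : SA y by apply: (SAseq (u := u)) => // n; exact: Tsub.
split => // U [V [oV ->]] [Vy _].
have [N HN] := hc V oV Vy.
have [_ h] := hu N; apply: h; first by exists V.
by split; [apply: HN | apply: Tsub].
Qed.

Lemma Tfwd z t : T z -> 0 <= t -> T (Phi t z).
Proof.
move=> [Sz hz] t0; split; first exact: SAfwd.
move=> U [V [oV ->]] [Vz _].
have [B [oB [Bz HB]]] := Phi_cont Sz t0 oV Vz.
have [a [[Ba Sa] Aa]] := hz (B `&` SA) (ex_intro _ B (conj oB erefl)) (conj Bz Sz).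
case: hA => _ [_ [[_ hinvA] _]].
have [h1 _] := hinvA t t0.
exists (Phi t a); split; last first.
  apply: h1; exists t, a; split => //; split => //; split => //; exact: SAD.
split; [apply: HB => //; exact: SAD | exact: SAfwd].
Qed.

Lemma Tsep z : SA z -> ~ T z -> exists V, nbhd_in SA A V /\ ~ rel_closure SA V z.
Proof.
move=> Sz nTz.
have [Op [oO [Oz OA]]] : exists Op, open Op /\ Op z /\ forall a, A a -> ~ Op a.
  apply: contrapT => hne; apply: nTz; split => // U [Op [oO ->]] [Oz _].
  apply: contrapT => hU; apply: hne; exists Op; split => //; split => // a Aa Oa.
  apply: hU; exists a; split => //; split => //; exact: AS.
have nCz : ~ closure A z.
  move=> /(_ Op (open_nbhs_nbhs (conj oO Oz))) [a [Aa Oa]]; exact: OA Oa.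
have oB : open (~` [set z]).
  apply: closed_openC; apply: accessible_closed_set1; exact: hausdorff_accessible.
have snB : set_nbhs (closure A) (~` [set z]).
  apply/set_nbhsP; exists (~` [set z]); split => // x Cx xz.
  by apply: nCz; rewrite -xz.
have [C' sC' clC'] := hN (@closed_closure _ A) snB.
have [Q' [oO' CO' Q'C']] := (set_nbhsP _ _).1 sC'.
exists (Q' `&` SA); split.
  split; first by move=> x [].
  move=> y [Sy hy]; exists (Q' `&` SA); split; first by exists Q'.
  split => //; split => //; apply: CO'.
  move=> Bn; rewrite nbhsE => -[Bo [oBo Boy] BoBn].
  have [a [[Boa _] Aa]] := hy (Bo `&` SA) (ex_intro _ Bo (conj oBo erefl)) (conj Boy Sy).
  by exists a; split => //; apply: BoBn.
move=> [_ hz].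
have : closure C' z.
  move=> Bn; rewrite nbhsE => -[Bo [oBo Boz] BoBn].
  have [w [[Bow _] [Q'w _]]] := hz (Bo `&` SA) (ex_intro _ Bo (conj oBo erefl)) (conj Boz Sz).
  by exists w; split; [apply: Q'C' | apply: BoBn].
by move=> /clC' /(_ erefl).
Qed.

Lemma Tinter z : SA z -> (forall V, nbhd_in SA A V -> rel_closure SA V z) -> T z.
Proof.
move=> Sz h; apply: contrapT => nT.
have [V [hV nV]] := Tsep Sz nT; exact: nV (h V hV).
Qed.

Lemma Tevery z : SA z -> (forall V, nbhd_in SA A V -> V z) -> T z.
Proof.
move=> Sz h; apply: Tinter => // V hV; split => // U _ Uz.
by exists z; split => //; apply: h.
Qed.
Lemma fs_shift g c : full_solution D Phi g -> full_solution D Phi (fun s => g (s + c)).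
Proof.
move=> hg s t st.
have [h1 h2] : D (t + c - (s + c), g (s + c)) /\ g (t + c) = Phi (t + c - (s + c)) (g (s + c)).
  by apply: hg; nlra.
have e : t + c - (s + c) = t - s by ring.
by rewrite -e.
Qed.

Variable N : set X.
Hypothesis hNb : nbhd_in SA A N.
Hypothesis hNat : attracts_in D Phi SA A N.
Hypothesis hmax : forall K, K `<=` N -> s_compact_in SA K -> invariant_in D Phi SA K -> K `<=` A.

Lemma TintN z : T z -> rel_interior SA N z.
Proof. by case: hNb => _ h /h. Qed.

Lemma intN_sub z : rel_interior SA N z -> N z.
Proof. by move=> [W [_ [Wz WN]]]; apply: WN. Qed.

Lemma NSA z : N z -> SA z.
Proof. by case: hNb => h _ /h. Qed.

Lemma intN_nbhd : nbhd_in SA A (rel_interior SA N).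
Proof.
split; first by move=> z /intN_sub /NSA.
move=> y /TintN [W [rW [Wy WN]]]; exists W; split => //; split => // w Ww.
by exists W.
Qed.

Lemma NOmega y : N y -> region_of_attraction_in D Phi SA A y.
Proof.
move=> Ny; split; first exact: NSA.
case: hNat => hND hNa; split.
  by move=> x -> t t0; apply: hND.
move=> V hV; have [t0 [t0p ht0]] := hNa V hV; exists t0; split => // t tt0.
move=> w [t' [x [tt' [xy [Dx ->]]]]].
apply: (ht0 t tt0); exists t', x; split => //; split => //; by rewrite xy.
Qed.

Lemma OmegaG g tau : full_solution D Phi g -> region_of_attraction_in D Phi SA A (g tau) ->
  forall V, nbhd_in SA A V -> exists M, forall t, M < t -> V (g t).
Proof.
move=> hg [_ [_ ha]] V hV; have [t0 [t0p ht0]] := ha V hV.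
exists (tau + t0) => t Mt.
have [Dt gt] : D (t - tau, g tau) /\ g t = Phi (t - tau) (g tau) by apply: hg; nlra.
rewrite gt; apply: (ht0 (t - tau)); first nlra.
by exists (t - tau), (g tau).
Qed.

Lemma omT g tn y : full_solution D Phi g -> (forall t, SA (g t)) ->
  (exists tau, region_of_attraction_in D Phi SA A (g tau)) ->
  (forall M, exists N1 : nat, forall n, leq N1 n -> M < tn n) -> scvg (g \o tn) y -> T y.
Proof.
move=> hg hS [tau hO] htn hc.
have Sy : SA y := SAseq (fun n => hS (tn n)) hc.
apply: Tinter => // V hV; split => // U [Vo [oVo ->]] [Voy _].
have [N1 H1] := hc Vo oVo Voy.
have [M HM] := OmegaG hg hO hV.
have [N2 H2] := htn M.
exists (g (tn (maxn N1 N2))); split; first split.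
- apply: H1; exact: leq_maxl.
- exact: hS.
- apply: HM; apply: H2; exact: leq_maxr.
Qed.

Lemma back g sn y : full_solution D Phi g -> (forall t, SA (g t)) ->
  (forall M, exists N1 : nat, forall n, leq N1 n -> sn n < M) -> scvg (g \o sn) y ->
  rel_interior SA N y -> forall tau, T (g tau).
Proof.
move=> hg hS hsn hc [W [[Op [oOp ->]] [[Opy Sy] WN]]] tau.
have [N1 H1] := hc Op oOp Opy.
apply: Tevery => // V hV.
case: hNat => _ hNa; have [t0 [t0p ht0]] := hNa V hV.
have [N2 H2] := hsn (tau - t0).
set n := maxn N1 N2.
have h1 : sn n < tau - t0 by apply: H2; exact: leq_maxr.
have hNn : N (g (sn n)).
  by apply: WN; split; [apply: H1; exact: leq_maxl | exact: hS].
have [Dn gn] : D (tau - sn n, g (sn n)) /\ g tau = Phi (tau - sn n) (g (sn n)).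
  by apply: hg; nlra.
rewrite gn; apply: (ht0 (tau - sn n)); first nlra.
by exists (tau - sn n), (g (sn n)).
Qed.
Lemma diag (s : nat -> R -> X) : (forall n, full_solution D Phi (s n)) -> (forall n t, SA (s n t)) ->
  exists (phi : nat -> nat) (sig : R -> X), incr phi /\ full_solution D Phi sig /\
    (forall t, SA (sig t)) /\ forall k : nat, scvg (fun n => s (phi n) (- k%:R)) (sig (- k%:R)).
Proof.
move=> hs hS.
have ext f (k : nat) : exists psi : nat -> nat, incr psi /\
    exists w, SA w /\ scvg (fun n => s (f (psi n)) (- k%:R)) w.
  case: hSA => _ [[_ hcomp] _].
  have [psi [w [hpsi [Sw hc]]]] := hcomp (fun n => s (f n) (- k%:R)) (fun n => hS _ _).
  exists psi; split => //; exists w; split => //.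
  exact: (@rel_cvg_scvg _ setT).
pose pe f k := projT1 (cid (ext f k)).
have peP f k : incr (pe f k) /\ exists w, SA w /\ scvg (fun n => s (f (pe f k n)) (- k%:R)) w.
  exact: (projT2 (cid (ext f k))).
have hp f k : incr (pe f k) := (peP f k).1.
pose d n := Fdiag pe n n.
have dincr : incr d := diag_incr hp.
have conv k : exists w, SA w /\ scvg (fun n => s (d n) (- k%:R)) w.
  have [w [Sw hw]] : exists w, SA w /\ scvg (fun n => s (Fdiag pe k n) (- k%:R)) w.
    case: k => [|k] /=; [exact: (peP id 0%N).2 | exact: (peP (Fdiag pe k) k.+1).2].
  exists w; split => // V oV Vw.
  have [M HM] := hw V oV Vw.
  exists (maxn k M) => n hn.
  have kn : leq k n by apply: leq_trans hn; exact: leq_maxl.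
  have [m' [nm' e]] := Fdiag_tail hp k (n - k) n.
  have -> : d n = Fdiag pe k m' by rewrite -e subnKC.
  apply: HM; apply: leq_trans nm'; apply: leq_trans hn; exact: leq_maxr.
pose w k := projT1 (cid (conv k)).
have wS k : SA (w k) := (projT2 (cid (conv k))).1.
have wc k : scvg (fun n => s (d n) (- k%:R)) (w k) := (projT2 (cid (conv k))).2.
case: hLS => _ [_ [_ [h0 h3]]].
have w1 k : Phi 1 (w k.+1) = w k.
  apply: (scvg_unique hH _ (wc k)).
  apply: (@scvg_ext _ (fun n => Phi 1 (s (d n) (- k.+1%:R)))).
    move=> n.
    have [_ ->] := hs (d n) (- k.+1%:R) (- k%:R) ltac:(rewrite -addn1 natrD; nlra).
    congr Phi; rewrite R1E mulrS; nlra.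
  apply: scvg_Phi; [exact: wS | rewrite R1E; nlra | move=> n; exact: hS | exact: wc].
have wj k j : Phi j%:R (w (addn k j)) = w k.
  elim: j => [|j IH]; first by rewrite addn0 h0.
  rewrite addnS mulrSr h3.
  - by rewrite w1.
  - exact: ler0n.
  - by [].
  - apply: SAD => //; have := ler0n R j; nlra.
pose nf t := projT1 (cid (natbound (- t))).
have nfP t : - t <= (nf t)%:R := projT2 (cid (natbound (- t))).
pose sig t := Phi (t + (nf t)%:R) (w (nf t)).
have key t n m : - t <= n%:R -> leq n m -> Phi (t + m%:R) (w m) = Phi (t + n%:R) (w n).
  move=> hn nm; rewrite !RplusE -(subnKC nm) natrD -(wj n (subn m n)) addrA.
  apply: h3; [nlra | exact: ler0n | apply: SAD => //; have := ler0n R (subn m n); nlra].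
have sig_eq t m : - t <= m%:R -> sig t = Phi (t + m%:R) (w m).
  move=> hm; rewrite /sig; case: (leqP (nf t) m) => h.
  - by rewrite (key t (nf t) m (nfP t) h).
  - by rewrite (key t m (nf t) hm (ltnW h)).
have sigS t : SA (sig t) by apply: SAfwd => //; have := nfP t; nlra.
exists d, sig; split => //; split; last split => //.
  move=> a b ab; split; first by apply: SAD => //; nlra.
  have hb : - b <= (nf a)%:R by have := nfP a; nlra.
  rewrite (sig_eq b (nf a) hb) /sig ?RplusE ?RminusE.
  have -> : b + (nf a)%:R = (b - a) + (a + (nf a)%:R) by ring.
  apply: h3; [nlra | have := nfP a; nlra | apply: SAD => //; have := nfP a; nlra].
move=> k; have -> : sig (- k%:R) = w k.
  rewrite (sig_eq _ k); last by rewrite opprK.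
  by rewrite RplusE addNr h0.
exact: wc.
Qed.
Lemma Tall sig : full_solution D Phi sig -> (forall k : nat, T (sig (- k%:R))) ->
  forall tau, T (sig tau).
Proof.
move=> hs hk tau; have [k hk'] := natbound (- tau).
have [_ ->] : D (tau - (- k%:R), sig (- k%:R)) /\ sig tau = Phi (tau - (- k%:R)) (sig (- k%:R)).
  by apply: hs; rewrite lerNl.
apply: Tfwd; first exact: hk.
rewrite RminusE subr_ge0 lerNl; exact: hk'.
Qed.

Lemma Kthm sig : full_solution D Phi sig -> (forall tau, T (sig tau)) -> forall tau, A (sig tau).
Proof.
move=> hs hT.
pose K := [set z | exists s, full_solution D Phi s /\ (forall tau, T (s tau)) /\ s 0 = z].
have KA : K `<=` A.
  apply: hmax.
  - move=> z [s [_ [hT' <-]]]; apply/intN_sub/TintN; exact: hT'.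
  - split; first by move=> z [s [_ [hT' <-]]]; apply: Tsub.
    move=> u hu.
    pose s n := projT1 (cid (hu n)).
    have sP n : full_solution D Phi (s n) /\ (forall tau, T (s n tau)) /\ s n 0 = u n.
      exact: (projT2 (cid (hu n))).
    have [phi [sg [hphi [hsg [sgS hc]]]]] :=
      diag (fun n => (sP n).1) (fun n t => Tsub ((sP n).2.1 t)).
    have hTk k : T (sg (- k%:R)) := Tseq (fun n => (sP (phi n)).2.1 _) (hc k).
    exists phi, (sg 0); split => //; split.
      by exists sg; split => //; split => //; exact: Tall.
    apply: scvg_rel_cvg => [n|].
      by apply: Tsub; rewrite /= -(sP (phi n)).2.2; apply: (sP (phi n)).2.1.
    have h0' := hc 0%N; rewrite mulr0n oppr0 in h0'.
    apply: (scvg_ext _ h0') => n /=; exact: (sP (phi n)).2.2.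
  - split; first by move=> z [s [_ [hT' <-]]]; apply: Tsub.
    move=> t t0; split.
    + move=> y [t' [z [tt' [[s [hs' [hT' sz]]] [Dz ->]]]]].
      rewrite tt'.
      exists (fun r => s (r + t)); split; first exact: fs_shift.
      split; first by move=> tau; exact: hT'.
      transitivity (s t); first by congr s; nlra.
      have [_ ->] := hs' 0 t t0; rewrite sz; congr Phi; nlra.
    + move=> z [s [hs' [hT' sz]]].
      exists t, (s (- t)); split => //; split.
        exists (fun r => s (r + - t)); split; first exact: fs_shift.
        split; first by move=> tau; exact: hT'.
        by congr s; nlra.
      have [Dz ez] : D (0 - (- t), s (- t)) /\ s 0 = Phi (0 - (- t)) (s (- t)).
        by apply: hs'; nlra.
      split; first by move: Dz; congr D; congr pair; nlra.
      by rewrite -sz ez; congr Phi; nlra.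
move=> tau; apply: KA; exists (fun r => sig (r + tau)); split; first exact: fs_shift.
split; first by move=> r; exact: hT.
by congr sig; nlra.
Qed.
Lemma main g x : (forall t, SA (g t)) -> full_solution D Phi g -> g 0 = x ->
  (omega_limit g `&` dual_repeller_in D Phi SA A !=set0 ->
     range g `<=` dual_repeller_in D Phi SA A) /\
  (alpha_limit g `&` rel_closure SA A !=set0 -> range g `<=` A) /\
  (SA x -> ~ A x -> ~ dual_repeller_in D Phi SA A x ->
     alpha_limit g `<=` dual_repeller_in D Phi SA A /\ omega_limit g `<=` A).
Proof.
move=> hS hg gx; split; [|split].
- move=> [y [[tn [htn hc]] [Sy nOy]]] _ [tau _ <-]; split; first exact: hS.
  move=> Og; apply: nOy; apply/NOmega/intN_sub/TintN.
  apply: (omT hg hS (ex_intro _ tau Og) (realinf htn)); exact/scvgP.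
- move=> [y [[sn [hsn hc]] Ty]] _ [tau _ <-].
  apply: (Kthm hg) => r.
  exact: (back hg hS (realminf hsn) ((scvgP _ _).1 hc) (TintN Ty)).
- move=> Sx nAx nAsx.
  have Ox : region_of_attraction_in D Phi SA A (g 0).
    rewrite gx; apply: contrapT => nO; apply: nAsx; by split.
  split.
  + move=> y [sn [hsn hc]].
    have hc' := (scvgP _ _).1 hc.
    have Sy : SA y := SAseq (fun n => hS (sn n)) hc'.
    split => // Oy.
    have [_ [_ ha]] := Oy.
    have [t0 [t0p ht0]] := ha _ intN_nbhd.
    pose t := t0 + 1.
    have hyt : rel_interior SA N (Phi t y).
      apply: (ht0 t); first by rewrite /t; nlra.
      exists t, y; split => //; split => //; split => //.
      apply: SAD => //; rewrite /t; nlra.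
    have hsn' := realminf hsn.
    have hcv : scvg (g \o (fun n => sn n + t)) (Phi t y).
      apply: (@scvg_ext _ (fun n => Phi t (g (sn n)))).
        move=> n /=.
        have [_ ->] : D (sn n + t - sn n, g (sn n)) /\ g (sn n + t) = Phi (sn n + t - sn n) (g (sn n)).
          by apply: hg; rewrite /t; nlra.
        by congr Phi; nlra.
      apply: scvg_Phi; [exact: Sy | rewrite /t; nlra | move=> n; exact: hS | exact: hc'].
    have hsnt : forall M, exists N1 : nat, forall n, leq N1 n -> sn n + t < M.
      move=> M; have [N1 HN] := hsn' (M - t); exists N1 => n hn; have := HN n hn; nlra.
    have hT := back hg hS hsnt hcv hyt.
    apply: nAx; rewrite -gx; exact: (Kthm hg hT).
  + move=> y [tn [htn hc]].
    have hc' := (scvgP _ _).1 hc.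
    have htn' := realinf htn.
    pose s n := fun r => g (r + tn n).
    have [phi [sg [hphi [hsg [sgS hcv]]]]] :=
      @diag s (fun n => fs_shift (tn n) hg) (fun n r => hS _).
    have hTk k : T (sg (- k%:R)).
      apply: (omT hg hS (ex_intro _ 0 Ox) (tn := fun n => tn (phi n) - k%:R)).
        move=> M; have [N1 HN] := htn' (M + k%:R); exists N1 => n hn.
        have := HN (phi n) (leq_trans hn (incr_ge hphi n)); nlra.
      apply: (scvg_ext _ (hcv k)) => n /=; rewrite /s; congr g; nlra.
    have hy : sg 0 = y.
      have h0' := hcv 0%N; rewrite mulr0n oppr0 in h0'.
      apply: (scvg_unique hH h0').
      apply: (@scvg_ext _ ((g \o tn) \o phi)); last exact: scvg_sub.
      move=> n /=; rewrite /s; congr g; nlra.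
    rewrite -hy; exact: (Kthm hsg (Tall hsg hTk)).
Qed.
End Main.

Theorem proposition6p2 (X : topologicalType) (D : set (R * X)) (Phi : R -> X -> X)
  (SA A : set X) (g : R -> X) (x : X) :
  normal_space X -> hausdorff_space X ->
  local_semiflow D Phi ->
  attractor D Phi SA ->
  attractor_in D Phi SA A ->
  (forall t, SA (g t)) -> full_solution D Phi g -> g 0 = x ->
  (omega_limit g `&` dual_repeller_in D Phi SA A !=set0 ->
     range g `<=` dual_repeller_in D Phi SA A) /\
  (alpha_limit g `&` rel_closure SA A !=set0 -> range g `<=` A) /\
  (SA x -> ~ A x -> ~ dual_repeller_in D Phi SA A x ->
     alpha_limit g `<=` dual_repeller_in D Phi SA A /\ omega_limit g `<=` A).
Proof.
move=> hN hH hLS hSA hA hS hg gx.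
have hA' := hA; case: hA' => _ [_ [_ [N [hNb [hNat hmax]]]]].
exact: (main hN hH hLS hSA hA hNb hNat hmax hS hg gx).
Qed.
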